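(* Every EPS-graph is $1$-critical, but not $0$-critical.
   Context: All graphs are finite and simple; $\mathrm{Forb}(H)$ is the family of graphs with no induced subgraph isomorphic to $H$. $\mathcal{C}$ is the family of complete graphs; $\iota(J)$ is the family of graphs isomorphic to induced subgraphs of $J$; $\mathcal{F}_1\vee\mathcal{F}_2$ (resp. $\mathcal{F}_1\wedge\mathcal{F}_2$) is the family of disjoint unions (resp. joins) of a graph in $\mathcal{F}_1$ and a graph in $\mathcal{F}_2$; $S_2$ is the edgeless graph on $2$ vertices, $K_2$ an edge. $\mathcal{C}^+$ is the family of graphs $G$ that are complete or such that $G\setminus v$ is complete for some $v\in V(G)$ with $\deg(v)\le1$. The complement of a star $K_{1,m}$ is called the complement of a star. For a positive integer $l$, a graph $H$ is an $l$-EPS-graph if: (EPS1) for every $1\le s\le l$, $V(H)$ can be partitioned into $s$ stable sets and $l-s$ cliques; (EPS2) for each $\mathcal{G}\in\{\iota(S_2)\vee\mathcal{C},\iota(K_2)\vee\mathcal{C},\iota(S_2)\wedge\mathcal{C},\mathcal{C}^+\}$, $V(H)$ can be partitioned into $l-1$ cliques and a set inducing a graph in $\mathcal{G}$; (EPS3) there is no partition $(X_1,\dots,X_l)$ of $V(H)$ such that $H[X_1]$ is a clique or a complement of a star and $X_i$ is a clique for $2\le i\le l$. An EPS-graph is an $l$-EPS-graph for some $l$. $\mathcal{H}(s,t)$ is the family of graphs whose vertex set partitions into $s$ stable sets and $t$ cliques. For hereditary $\mathcal{F}$, $\chi_c(\mathcal{F})$ is the maximum $l$ with $\mathcal{H}(s,l-s)\subseteq\mathcal{F}$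 for some $0\le s\le l$. With $l=\chi_c(\mathcal{F})$, $J$ is $\mathcal{F}$-reduced if there is $0\le s\le l-1$ such that $\mathcal{F}$ contains every graph whose vertex set partitions into $l$ parts, one inducing a graph isomorphic to an induced subgraph of $J$, $s$ stable sets and $l-1-s$ cliques; $\mathrm{red}(\mathcal{F})$ is the family of $\mathcal{F}$-reduced graphs. A graph $G$ is an $s$-star if there is $S\subseteq V(G)$, $|S|\le s$, with $G-S$ complete or edgeless and every vertex of $S$ adjacent to all or none of $V(G)\setminus S$. A graph $H$ is $s$-critical if there is $n_0$ such that every $K\in\mathrm{red}(\mathrm{Forb}(H))$ with $|V(K)|\ge n_0$ is an $s$-star. *)

(* Defs.v *)
From mathcomp Require Import all_boot.
Set Implicit Arguments. Unset Strict Implicit. Unset Printing Implicit Defensive.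

Record graph := Graph {
  vert : finType;
  adj : rel vert;
  adj_sym : symmetric adj;
  adj_irr : irreflexive adj }.

Definition gfam := graph -> Prop.

Section Induced.
Variables (G : graph) (A : {set vert G}).
Definition ind_vert : finType := {x : vert G | x \in A}.
Definition ind_adj : rel ind_vert := fun x y => adj (val x) (val y).
Lemma ind_adj_sym : symmetric ind_adj.
Proof. by move=> x y; rewrite /ind_adj adj_sym. Qed.
Lemma ind_adj_irr : irreflexive ind_adj.
Proof. by move=> x; rewrite /ind_adj adj_irr. Qed.
Definition induced : graph := Graph ind_adj_sym ind_adj_irr.
End Induced.

Section Compl.
Variable G : graph.
Definition compl_adj : rel (vert G) := fun x y => (x != y) && ~~ adj x y.
Lemma compl_adj_sym : symmetric compl_adj.
Proof. by move=> x y; rewrite /compl_adj eq_sym adj_sym. Qed.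
Lemma compl_adj_irr : irreflexive compl_adj.
Proof. by move=> x; rewrite /compl_adj eqxx. Qed.
Definition compl : graph := Graph compl_adj_sym compl_adj_irr.
End Compl.

(* the star K_{1,m} on 'I_m.+1, with centre ord0 *)
Definition star_adj (m : nat) : rel 'I_m.+1 :=
  fun x y => (x == ord0) (+) (y == ord0).
Arguments star_adj m : clear implicits.
Lemma star_adj_sym (m : nat) : symmetric (star_adj m).
Proof. by move=> x y; rewrite /star_adj addbC. Qed.
Lemma star_adj_irr (m : nat) : irreflexive (star_adj m).
Proof. by move=> x; rewrite /star_adj addbb. Qed.
Definition star (m : nat) : graph := Graph (@star_adj_sym m) (@star_adj_irr m).

Definition S2_adj : rel 'I_2 := fun _ _ => false.
Lemma S2_adj_sym : symmetric S2_adj. Proof. by []. Qed.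
Lemma S2_adj_irr : irreflexive S2_adj. Proof. by []. Qed.
Definition S2 : graph := Graph S2_adj_sym S2_adj_irr.
Definition K2_adj : rel 'I_2 := fun x y => x != y.
Lemma K2_adj_sym : symmetric K2_adj.
Proof. by move=> x y; rewrite /K2_adj eq_sym. Qed.
Lemma K2_adj_irr : irreflexive K2_adj.
Proof. by move=> x; rewrite /K2_adj eqxx. Qed.
Definition K2 : graph := Graph K2_adj_sym K2_adj_irr.

Definition iso (G H : graph) : Prop :=
  exists f : vert G -> vert H, bijective f /\ forall x y, adj (f x) (f y) = adj x y.
Definition is_induced_sub (H G : graph) : Prop :=
  exists f : vert H -> vert G, injective f /\ forall x y, adj (f x) (f y) = adj x y.

Definition iota (J : graph) : gfam := fun G => is_induced_sub G J.
Definition Forb (H : graph) : gfam := fun G => ~ is_induced_sub H G.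

Definition stable (G : graph) (A : {set vert G}) : Prop :=
  forall x y, x \in A -> y \in A -> ~~ adj x y.
Definition clique (G : graph) (A : {set vert G}) : Prop :=
  forall x y, x \in A -> y \in A -> x != y -> adj x y.
Definition complete (G : graph) : Prop := clique [set: vert G].

Definition Cfam : gfam := complete.

Definition disj_union (F1 F2 : gfam) : gfam := fun G =>
  exists A : {set vert G}, F1 (induced A) /\ F2 (induced (~: A)) /\
    forall x y, x \in A -> y \notin A -> ~~ adj x y.
Definition join_fam (F1 F2 : gfam) : gfam := fun G =>
  exists A : {set vert G}, F1 (induced A) /\ F2 (induced (~: A)) /\
    forall x y, x \in A -> y \notin A -> adj x y.

Definition Cplus : gfam := fun G =>
  complete G \/
  exists v : vert G, #|[set w | adj v w]| <= 1 /\ complete (induced [set~ v]).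

Definition costar (G : graph) : Prop := exists m, iso G (compl (star m)).

(* H(s,t): vertex set partitions into s stable sets and t cliques
   (colour classes i < s stable, the others cliques; parts may be empty) *)
Definition Hst (s t : nat) : gfam := fun G =>
  exists c : vert G -> 'I_(s + t),
    forall i : 'I_(s + t),
      if i < s then stable [set x | c x == i] else clique [set x | c x == i].

Definition sub_fam (F1 F2 : gfam) : Prop := forall G, F1 G -> F2 G.

Definition chi_c_is (F : gfam) (l : nat) : Prop :=
  (exists s, s <= l /\ sub_fam (Hst s (l - s)) F) /\
  (forall l', (exists s, s <= l' /\ sub_fam (Hst s (l' - s)) F) -> l' <= l).

Definition reduced (F : gfam) (J : graph) : Prop :=
  exists l, chi_c_is F l /\
  exists s, s < l /\
    forall G : graph,
      (exists c : vert G -> option 'I_(s + (l - 1 - s)),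
         iota J (induced [set x | c x == None]) /\
         forall i : 'I_(s + (l - 1 - s)),
           if i < s then stable [set x | c x == Some i]
           else clique [set x | c x == Some i]) ->
      F G.

Definition sstar (s : nat) (G : graph) : Prop :=
  exists S : {set vert G}, #|S| <= s /\
    (clique (~: S) \/ stable (~: S)) /\
    forall v, v \in S ->
      (forall w, w \notin S -> adj v w) \/ (forall w, w \notin S -> ~~ adj v w).

Definition critical (s : nat) (H : graph) : Prop :=
  exists n0, forall K : graph, reduced (Forb H) K -> n0 <= #|vert K| -> sstar s K.

Definition EPS2_for (l : nat) (H : graph) (F : gfam) : Prop :=
  exists c : vert H -> option 'I_(l - 1),
    (forall i, clique [set x | c x == Some i]) /\ F (induced [set x | c x == None]).

Definition lEPS (l : nat) (H : graph) : Prop :=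
  0 < l /\
  (forall s, 1 <= s <= l -> Hst s (l - s) H) /\
  EPS2_for l H (disj_union (iota S2) Cfam) /\
  EPS2_for l H (disj_union (iota K2) Cfam) /\
  EPS2_for l H (join_fam (iota S2) Cfam) /\
  EPS2_for l H Cplus /\
  ~ (exists c : vert H -> option 'I_(l - 1),
        (complete (induced [set x | c x == None]) \/
         costar (induced [set x | c x == None])) /\
        forall i, clique [set x | c x == Some i]).

Definition EPS (H : graph) : Prop := exists l, lEPS l H.

(* Main.v *)
Require Import Defs.
From mathcomp Require Import all_boot zify.
Set Implicit Arguments. Unset Strict Implicit. Unset Printing Implicit Defensive.

Lemma inj_into (T1 T2 : finType) (x0 : T2) (B : {set T1}) (Q : {set T2}) :
  #|B| <= #|Q| -> exists h : T1 -> T2,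
    {in B &, injective h} /\ forall x, x \in B -> h x \in Q.
Proof.
move=> hBQ.
have hb : forall x, x \in B -> index x (enum B) < size (enum Q).
  by move=> x hx; rewrite -cardE (leq_trans _ hBQ) // cardE index_mem mem_enum.
exists (fun x => nth x0 (enum Q) (index x (enum B))); split.
- move=> x y hx hy /eqP; rewrite nth_uniq ?enum_uniq ?hb // => /eqP e.
  by rewrite -[x](nth_index x (s := enum B)) ?mem_enum // e nth_index ?mem_enum.
- by move=> x hx; rewrite -mem_enum mem_nth // hb.
Qed.

Lemma card_vert_induced (G : graph) (A : {set vert G}) : #|vert (induced A)| = #|A|.
Proof. by rewrite card_sig; apply: eq_card => x; rewrite inE. Qed.

Lemma adj_irrE (G : graph) (x : vert G) : adj x x = false.
Proof. exact: (adj_irr x). Qed.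

Lemma emb_clique (Y K : graph) (Q : {set vert K}) (k0 : vert K) :
  complete Y -> clique Q -> #|vert Y| <= #|Q| -> is_induced_sub Y K.
Proof.
move=> cY cQ hc.
have := inj_into k0 (B := [set: vert Y]) (Q := Q); rewrite cardsT => /(_ hc) [h [hinj hQ]].
have hi : injective h by move=> x y; apply: hinj; rewrite inE.
exists h; split => // x y.
have [->|nxy] := eqVneq x y; first by rewrite !adj_irrE.
rewrite cY ?inE // cQ ?hQ ?inE //.
by rewrite (inj_eq hi).
Qed.

Lemma emb_stable (Y K : graph) (Q : {set vert K}) (k0 : vert K) :
  stable [set: vert Y] -> stable Q -> #|vert Y| <= #|Q| -> is_induced_sub Y K.
Proof.
move=> cY cQ hc.
have := inj_into k0 (B := [set: vert Y]) (Q := Q); rewrite cardsT => /(_ hc) [h [hinj hQ]].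
have hi : injective h by move=> x y; apply: hinj; rewrite inE.
exists h; split => // x y.
by rewrite (negbTE (cY _ _ _ _)) ?inE // (negbTE (cQ _ _ _ _)) ?hQ ?inE.
Qed.

Lemma complete_ind (G : graph) (A : {set vert G}) x y :
  complete (induced A) -> x \in A -> y \in A -> x != y -> adj x y.
Proof.
move=> c hx hy nxy.
have := c (Sub x hx : vert (induced A)) (Sub y hy) (in_setT _) (in_setT _).
apply; apply: contra nxy => /eqP/(congr1 val) /= ->; done.
Qed.

Lemma emb_dj (Y K J : graph) (A : {set vert Y}) (beta : bool) (p : vert J -> vert K)
  (Q : {set vert K}) (k0 : vert K) :
  is_induced_sub (induced A) J -> complete (induced (~: A)) ->
  (forall x y, x \in A -> y \notin A -> adj x y = beta) ->
  injective p -> (forall i j, adj (p i) (p j) = adj i j) ->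
  clique Q -> (forall i, p i \notin Q) -> (forall i q, q \in Q -> adj (p i) q = beta) ->
  #|vert Y| <= #|Q| -> is_induced_sub Y K.
Proof.
move=> [g [ginj gadj]] cA cross pinj padj cQ pQ pbeta hc.
have := inj_into k0 (B := ~: A) (Q := Q).
rewrite (leq_trans (max_card _) hc) => /(_ isT) [h [hinj hQ]].
pose f y := if (insub y : option (vert (induced A))) is Some y' then p (g y') else h y.
have fA : forall y (hy : y \in A), f y = p (g (Sub y hy)).
  by move=> y hy; rewrite /f insubT.
have fN : forall y, y \notin A -> f y = h y.
  by move=> y hy; rewrite /f insubF //; apply: negbTE.
have adjf : forall y1 y2, y1 \in A -> y2 \notin A -> adj (f y1) (f y2) = adj y1 y2.
  move=> y1 y2 h1 h2; rewrite (fA _ h1) (fN _ h2) pbeta ?cross //.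
  by apply: hQ; rewrite inE.
exists f; split.
- move=> y1 y2.
  case h1: (y1 \in A); case h2: (y2 \in A).
  + rewrite (fA _ h1) (fA _ h2) => /pinj /ginj /(congr1 val) //.
  + rewrite (fA _ h1) (fN _ (negbT h2)) => e.
    by have := pQ (g (Sub y1 h1)); rewrite e hQ // inE h2.
  + rewrite (fN _ (negbT h1)) (fA _ h2) => e.
    by have := pQ (g (Sub y2 h2)); rewrite -e hQ // inE h1.
  + by rewrite (fN _ (negbT h1)) (fN _ (negbT h2)); apply: hinj; rewrite inE ?h1 ?h2.
- move=> y1 y2.
  case h1: (y1 \in A); case h2: (y2 \in A).
  + by rewrite (fA _ h1) (fA _ h2) padj gadj.
  + by rewrite adjf // h2.
  + by rewrite adj_sym [adj y1 y2]adj_sym adjf // h1.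
  + rewrite (fN _ (negbT h1)) (fN _ (negbT h2)).
    have [->|nxy] := eqVneq y1 y2; first by rewrite !adj_irrE.
    rewrite (complete_ind cA) ?inE ?h1 ?h2 // cQ ?hQ ?inE ?h1 ?h2 //.
    apply: contra nxy => /eqP e; apply/eqP; apply: hinj e; by rewrite inE ?h1 ?h2.
Qed.

Lemma emb_cplus (Y K : graph) (Q : {set vert K}) (u z : vert K) :
  Cplus Y -> clique Q -> u \in Q -> z \notin Q -> adj z u ->
  (forall q, q \in Q -> q != u -> ~~ adj z q) -> #|vert Y| < #|Q| ->
  is_induced_sub Y K.
Proof.
move=> [cY|[v [hdeg hcomp]]] cQ uQ zQ zu znQ hc.
  by apply: (emb_clique u cY cQ); apply: ltnW.
pose B := [set y | (y != v) && ~~ adj v y].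
have := inj_into u (B := B) (Q := Q :\ u).
have -> : #|B| <= #|Q :\ u|.
  have : #|B| <= #|[set~ v]|.
    by apply: subset_leq_card; apply/subsetP => y; rewrite !inE => /andP [].
  rewrite cardsC1 => hB; move: hc; rewrite (cardsD1 u Q) uQ; lia.
move=> /(_ isT) [h [hinj hQ]].
pose f y := if y == v then z else if adj v y then u else h y.
have fQ : forall y, y != v -> f y \in Q.
  move=> y yv; rewrite /f (negbTE yv); case: ifP => // ay.
  by have := hQ y; rewrite !inE yv ay => /(_ isT) /andP [].
have fneq : forall y1 y2, y1 != v -> y2 != v -> y1 != y2 -> f y1 != f y2.
  move=> y1 y2 h1 h2 n12; rewrite /f (negbTE h1) (negbTE h2).
  case a1: (adj v y1); case a2: (adj v y2).
  - move/card_le1_eqP: hdeg => /(_ y1 y2); rewrite !inE a1 a2 => /(_ isT isT) e.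
    by rewrite e eqxx in n12.
  - by have := hQ y2; rewrite !inE h2 a2 => /(_ isT) /andP [] /negbTE; rewrite eq_sym => ->.
  - by have := hQ y1; rewrite !inE h1 a1 => /(_ isT) /andP [] /negbTE ->.
  - apply: contra n12 => /eqP e; apply/eqP; apply: hinj e; by rewrite !inE ?h1 ?h2 ?a1 ?a2.
have adjv : forall y, adj (f v) (f y) = adj v y.
  move=> y; have [->|yv] := eqVneq y v; first by rewrite !adj_irrE.
  rewrite {1}/f eqxx /f (negbTE yv); case: ifP => // ay.
  apply: negbTE; apply: znQ.
    by have := hQ y; rewrite !inE yv ay => /(_ isT) /andP [].
  by have := hQ y; rewrite !inE yv ay => /(_ isT) /andP [].
exists f; split.
- move=> y1 y2 e; apply/eqP; apply: contraLR isT => n12.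
  have [e1|h1] := eqVneq y1 v; have [e2|h2] := eqVneq y2 v.
  + by rewrite e1 e2 eqxx in n12.
  + by move: (fQ _ h2); rewrite -e /f e1 eqxx (negbTE zQ).
  + by move: (fQ _ h1); rewrite e /f e2 eqxx (negbTE zQ).
  + by move: (fneq _ _ h1 h2 n12); rewrite e eqxx.
- move=> y1 y2.
  have [->|h1] := eqVneq y1 v; first exact: adjv.
  have [->|h2] := eqVneq y2 v; first by rewrite adj_sym adjv adj_sym.
  have [->|n12] := eqVneq y1 y2; first by rewrite !adj_irrE.
  rewrite cQ ?fQ ?fneq //; symmetry.
  by apply: (complete_ind hcomp); rewrite ?inE.
Qed.

Lemma clique_add (G : graph) (v : vert G) (Q : {set vert G}) :
  clique Q -> (forall q, q \in Q -> adj v q) -> clique (v |: Q).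
Proof.
move=> cQ hv x y; rewrite !in_setU1 => /orP [/eqP ->|hx] /orP [/eqP ->|hy] nxy.
- by rewrite eqxx in nxy.
- exact: hv.
- by rewrite adj_sym hv.
- exact: cQ.
Qed.

Lemma stable_add (G : graph) (v : vert G) (Q : {set vert G}) :
  stable Q -> (forall q, q \in Q -> ~~ adj v q) -> stable (v |: Q).
Proof.
move=> cQ hv x y; rewrite !in_setU1 => /orP [/eqP ->|hx] /orP [/eqP ->|hy].
- by rewrite adj_irrE.
- exact: hv.
- by rewrite adj_sym hv.
- exact: cQ.
Qed.

Lemma ramsey (G : graph) k : forall a b (V : {set vert G}), a + b = k -> 2 ^ k <= #|V| ->
  exists Q : {set vert G}, Q \subset V /\ ((clique Q /\ a <= #|Q|) \/ (stable Q /\ b <= #|Q|)).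
Proof.
elim: k => [|k IH] a b V hk hV.
  exists set0; split; first exact: sub0set.
  left; split; last by move: hk; case: a.
  by move=> x y; rewrite inE.
case: a hk => [|a] hk.
  exists set0; split; first exact: sub0set.
  by left; split => // x y; rewrite inE.
case: b hk => [|b] hk.
  exists set0; split; first exact: sub0set.
  by right; split => // x y; rewrite inE.
have : 0 < #|V| by rewrite (leq_trans _ hV) // expn_gt0.
rewrite card_gt0 => /set0Pn [v vV].
pose V' := V :\ v.
pose N := V' :&: [set w | adj v w].
pose M := V' :\: [set w | adj v w].
have hNM : #|N| + #|M| = #|V|.-1.
  by rewrite cardsID (cardsD1 v V) vV.
rewrite expnS in hV.
have [hN|hN] := leqP (2 ^ k) #|N|.
- have [Q [sQ [[cQ hQ]|[sQ' hQ]]]] := IH a b.+1 N ltac:(lia) hN.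
  + exists (v |: Q); split.
      apply/subsetP => x; rewrite in_setU1 => /orP [/eqP ->//|/(subsetP sQ)].
      by rewrite !inE => /andP [] /andP [].
    left; split.
      apply: clique_add => // q /(subsetP sQ); by rewrite !inE => /andP [].
    rewrite cardsU1; have -> : v \notin Q.
      by apply/negP => /(subsetP sQ); rewrite !inE eqxx.
    by rewrite add1n ltnS.
  + exists Q; split; last by right.
    by apply: (subset_trans sQ); apply/subsetP => x; rewrite !inE => /andP [] /andP [].
- have hM : 2 ^ k <= #|M| by lia.
  have [Q [sQ [[cQ hQ]|[sQ' hQ]]]] := IH a.+1 b M ltac:(lia) hM.
  + exists Q; split; last by left.
    by apply: (subset_trans sQ); apply/subsetP => x; rewrite !inE => /andP [] _ /andP [].
  + exists (v |: Q); split.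
      apply/subsetP => x; rewrite in_setU1 => /orP [/eqP ->//|/(subsetP sQ)].
      by rewrite !inE => /andP [] _ /andP [].
    right; split.
      apply: stable_add => // q /(subsetP sQ); by rewrite !inE => /andP [].
    rewrite cardsU1; have -> : v \notin Q.
      by apply/negP => /(subsetP sQ); rewrite !inE eqxx andbF.
    by rewrite add1n ltnS.
Qed.

Lemma clique_sub (G : graph) (A B : {set vert G}) : clique B -> A \subset B -> clique A.
Proof. by move=> cB sAB x y hx hy; apply: cB; apply: (subsetP sAB). Qed.

Lemma stable_sub (G : graph) (A B : {set vert G}) : stable B -> A \subset B -> stable A.
Proof. by move=> cB sAB x y hx hy; apply: cB; apply: (subsetP sAB). Qed.

Section Struct.
Variables (K : graph) (n : nat).
Hypothesis NA : forall (a b : vert K) (Q : {set vert K}), a != b -> ~~ adj a b -> clique Q ->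
  a \notin Q -> b \notin Q -> (forall q, q \in Q -> ~~ adj a q) ->
  (forall q, q \in Q -> ~~ adj b q) -> #|Q| < n.
Hypothesis NB : forall (a b : vert K) (Q : {set vert K}), a != b -> adj a b -> clique Q ->
  a \notin Q -> b \notin Q -> (forall q, q \in Q -> ~~ adj a q) ->
  (forall q, q \in Q -> ~~ adj b q) -> #|Q| < n.
Hypothesis NC : forall (a b : vert K) (Q : {set vert K}), a != b -> ~~ adj a b -> clique Q ->
  a \notin Q -> b \notin Q -> (forall q, q \in Q -> adj a q) ->
  (forall q, q \in Q -> adj b q) -> #|Q| < n.
Hypothesis ND : forall (Q : {set vert K}) (u z : vert K), clique Q -> u \in Q -> z \notin Q ->
  adj z u -> (forall q, q \in Q -> q != u -> ~~ adj z q) -> #|Q| <= n.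

Lemma struct1 (Q : {set vert K}) : clique Q -> 2 * n <= #|Q| -> sstar 1 K.
Proof.
move=> cQ hQ.
have step1 : forall v u q, v \notin Q -> u \in Q -> q \in Q -> adj v u -> adj v q.
  move=> v u q vQ uQ qQ vu; apply: contraT => vq.
  pose Nv := Q :&: [set w | adj v w].
  pose Mv := Q :\: [set w | adj v w].
  have hNM : #|Nv| + #|Mv| = #|Q| by rewrite cardsID.
  have [hM|hM] := leqP n #|Mv|.
    have uM : u \notin Mv by rewrite !inE vu.
    suff : #|u |: Mv| <= n by rewrite cardsU1 uM; lia.
    apply: (ND (u := u) (z := v)).
    - apply: clique_add; first by apply: (clique_sub cQ); apply/subsetP => x; rewrite !inE => /andP [].
      move=> x; rewrite !inE => /andP [xn xQ]; apply: cQ => //.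
      by apply/eqP => e; rewrite -e vu in xn.
    - by rewrite setU11.
    - rewrite !inE negb_or (negbTE vQ) andbF andbT; by apply: contraNneq vQ => ->.
    - exact: vu.
    - by move=> x; rewrite in_setU1 => /orP [/eqP ->|]; [rewrite eqxx | rewrite !inE => /andP []].
  have hN : n <= #|Nv| by lia.
  have := NC (a := v) (b := q) (Q := Nv).
  have qN : q \notin Nv by rewrite !inE (negbTE vq) andbF.
  move=> /(_ _ vq _ _ qN) H.
  suff : #|Nv| < n by lia.
  apply: H.
  - by apply: contraNneq vQ => ->.
  - by apply: (clique_sub cQ); apply/subsetP => x; rewrite !inE => /andP [].
  - by rewrite !inE (negbTE vQ).
  - by move=> x; rewrite !inE => /andP [].
  - move=> x xN; apply: cQ => //; first by move: xN; rewrite !inE => /andP [].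
    by apply: contraNneq qN => ->.
pose Z := [set v | (v \notin Q) && ~~ [exists q in Q, adj v q]].
have Zn : forall z q, z \in Z -> q \in Q -> ~~ adj z q.
  move=> z q; rewrite !inE => /andP [_ ne] qQ; apply: contra ne => zq.
  by apply/existsP; exists q; rewrite qQ.
have ZQ : forall z, z \in Z -> z \notin Q by move=> z; rewrite !inE => /andP [].
have full : forall v q, v \notin Z -> v \notin Q -> q \in Q -> adj v q.
  move=> v q; rewrite !inE negb_and !negbK => /orP [vQ'|/exists_inP [u uQ vu]] vQ qQ.
    by rewrite vQ' in vQ.
  exact: step1 vu.
have cZ : clique (~: Z).
  move=> x y; rewrite !in_setC => hx hy nxy.
  case xQ: (x \in Q); case yQ: (y \in Q).
  - exact: cQ.
  - by rewrite adj_sym; apply: full => //; rewrite yQ.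
  - by apply: full => //; rewrite xQ.
  - apply: contraT => nadj.
    have := NC nxy nadj cQ (negbT xQ) (negbT yQ).
    have h1 : forall q, q \in Q -> adj x q by move=> q; apply: full => //; rewrite xQ.
    have h2 : forall q, q \in Q -> adj y q by move=> q; apply: full => //; rewrite yQ.
    move=> /(_ h1 h2); lia.
exists Z; split; [|split].
- apply/card_le1_eqP => x y hx hy; apply/eqP; apply: contraT => nxy.
  rewrite eq_sym in nxy.
  case e: (adj x y).
  + have := NB nxy e cQ (ZQ _ hx) (ZQ _ hy) (fun q => Zn _ _ hx) (fun q => Zn _ _ hy); lia.
  + have := NA nxy (negbT e) cQ (ZQ _ hx) (ZQ _ hy) (fun q => Zn _ _ hx) (fun q => Zn _ _ hy); lia.
- by left.
- move=> z hz; right => w hw; apply: contraT => /negPn zw.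
  have wQ : w \notin Q by apply/negP => wQ'; rewrite (negbTE (Zn _ _ hz wQ')) in zw.
  have : #|w |: Q| <= n.
    apply: (ND (u := w) (z := z)).
    - apply: clique_add => // q qQ; exact: full.
    - by rewrite setU11.
    - rewrite in_setU1 negb_or (ZQ _ hz) andbT.
      by apply/eqP => e; move: hw; rewrite -e hz.
    - exact: zw.
    - by move=> q; rewrite in_setU1 => /orP [/eqP ->|qQ]; [rewrite eqxx | move=> _; exact: Zn].
  rewrite cardsU1 wQ; lia.
Qed.
End Struct.

Definition goodnat (G : graph) (s : nat) (phi : vert G -> nat) :=
  forall x y, phi x = phi y -> x != y -> if phi x < s then ~~ adj x y else adj x y.
Definition goodopt (G : graph) (s : nat) (phi : vert G -> option nat) :=
  forall x y k, phi x = Some k -> phi y = Some k -> x != y ->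
    if k < s then ~~ adj x y else adj x y.

Lemma Hst_nat (G : graph) s t (phi : vert G -> nat) :
  (forall x, phi x < s + t) -> goodnat s phi -> Hst s t G.
Proof.
move=> hb hg; exists (fun x => Ordinal (hb x)) => i.
case: ifP => hi x y; rewrite !inE => /eqP hx /eqP hy.
- have [->|nxy] := eqVneq x y; first by rewrite adj_irrE.
  have e : phi x = phi y by rewrite -[phi x]/(val (Ordinal (hb x))) hx -hy.
  by have := hg x y e nxy; rewrite -[phi x]/(val (Ordinal (hb x))) hx hi.
- move=> nxy.
  have e : phi x = phi y by rewrite -[phi x]/(val (Ordinal (hb x))) hx -hy.
  by have := hg x y e nxy; rewrite -[phi x]/(val (Ordinal (hb x))) hx hi.
Qed.

Lemma Hst_natE (G : graph) s t : Hst s t G ->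
  exists phi : vert G -> nat, (forall x, phi x < s + t) /\ goodnat s phi.
Proof.
move=> [c hc]; exists (fun x => val (c x)); split; first by move=> x; exact: ltn_ord.
move=> x y /val_inj e nxy.
have := hc (c x); case: ifP => _ h.
- by apply: h; rewrite inE // e.
- by apply: h; rewrite ?inE // e.
Qed.

Definition rl (s k : nat) := if k < s then k else k.-1.

Lemma relab (G : graph) (s s0 m : nat) (phi0 : vert G -> nat) :
  goodnat s0 phi0 -> (s0 = s \/ s0 = s.+1) -> (forall x, phi0 x < m.+1) -> s <= m ->
  let phi := fun x => if phi0 x == s then None else Some (rl s (phi0 x)) in
  (forall x k, phi x = Some k -> k < m) /\ goodopt s phi /\
  [set x | phi x == None] = [set x | phi0 x == s].
Proof.
move=> hg hs0 hb hsm phi; split; [|split].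
- move=> x k; rewrite /phi /rl; case: eqP => // ne [<-].
  have := hb x; case: ifP => h; lia.
- move=> x y k; rewrite /phi /rl.
  case: eqP => // nx; case: eqP => // ny [ex] [ey] nxy.
  have e : phi0 x = phi0 y.
    move: ex ey; case: ifP => hx; case: ifP => hy; lia.
  have := hg x y e nxy.
  have -> : (phi0 x < s0) = (k < s).
    move: ex; case: ifP => hx; case: hs0 => ->; lia.
  done.
- apply/setP => x; rewrite !inE /phi; by case: (phi0 x == s).
Qed.

Lemma emb_refl (G : graph) : is_induced_sub G G.
Proof. by exists id; split. Qed.

Lemma red_forbid (H K : graph) : reduced (Forb H) K ->
  exists l s, chi_c_is (Forb H) l /\ s < l /\
  forall phi : vert H -> option nat, (forall x k, phi x = Some k -> k < s + (l - 1 - s)) ->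
    goodopt s phi -> ~ is_induced_sub (induced [set x | phi x == None]) K.
Proof.
move=> [l [chi [s [sl Hred]]]]; exists l, s; split => //; split => // phi hb hg hemb.
pose c x := if phi x is Some k then (insub k : option 'I_(s + (l - 1 - s))) else None.
have cE : forall x i, c x = Some i -> phi x = Some (val i).
  move=> x i; rewrite /c; case: (phi x) => // k; case: insubP => // u _ <- [->] //.
have cN : [set x | c x == None] = [set x | phi x == None].
  apply/setP => x; rewrite !inE /c.
  case e: (phi x) => [k|] //; rewrite insubT //; exact: hb e.
apply: (Hred H _ (emb_refl H)); exists c; split; first by rewrite cN.
move=> i; case: ifP => hi x y; rewrite !inE => /eqP hx /eqP hy.
- have [->|nxy] := eqVneq x y; first by rewrite adj_irrE.
  by have := hg x y _ (cE _ _ hx) (cE _ _ hy) nxy; rewrite hi.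
- move=> nxy.
  by have := hg x y _ (cE _ _ hx) (cE _ _ hy) nxy; rewrite hi.
Qed.

Lemma goodnat_pull (G H : graph) s (phi : vert G -> nat) (f : vert H -> vert G) :
  injective f -> (forall x y, adj (f x) (f y) = adj x y) -> goodnat s phi ->
  goodnat s (fun x => phi (f x)).
Proof.
move=> finj fadj hg x y e nxy; rewrite -fadj; apply: hg => //.
by rewrite (inj_eq finj).
Qed.

Lemma goodnat_thr (G : graph) s s' (phi : vert G -> nat) :
  (forall x, (phi x < s) = (phi x < s')) -> goodnat s phi -> goodnat s' phi.
Proof. by move=> e hg x y exy nxy; rewrite -e; apply: hg. Qed.

Lemma insub_someE m k (i : 'I_m) : insub k = Some i -> k = val i.
Proof. by case: insubP => // u _ <- [->]. Qed.

Lemma insub_noneE m k : (insub k : option 'I_m) = None -> m <= k.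
Proof. by case: insubP => // /negP hk _; rewrite leqNgt; apply/negP. Qed.

Lemma chi_l (H : graph) l : lEPS l H -> chi_c_is (Forb H) l.
Proof.
move=> [l0 [E1 [E2a [E2b [E2c [E2d E3]]]]]].
split.
- exists 0; split => //.
  move=> G /Hst_natE [phi [hb hg]] [f [finj fadj]]; apply: E3.
  have hg' := goodnat_pull finj fadj hg.
  pose c' x : option 'I_(l-1) := insub (phi (f x)).
  exists c'; split.
  + left => x y _ _ nxy.
    have hx := valP x; have hy := valP y; rewrite !inE in hx hy.
    move/eqP/insub_noneE: hx => hx; move/eqP/insub_noneE: hy => hy.
    have bx := hb (f (val x)); have by' := hb (f (val y)).
    have e : phi (f (val x)) = phi (f (val y)) by lia.
    have := hg' _ _ e; rewrite ltn0; apply.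
    by apply: contra nxy => /eqP /val_inj ->.
  + move=> i x y; rewrite !inE => /eqP /insub_someE hx /eqP /insub_someE hy nxy.
    have := hg' x y; rewrite hx hy ltn0; exact.
- move=> l' [s [sl' hsub]]; rewrite leqNgt; apply/negP => ll'.
  apply: (hsub H _ (emb_refl H)).
  have [s0|spos] := posnP s.
  + subst s; rewrite subn0.
    move: E2d => [c [hcl [hC|[v [hdeg hcomp]]]]].
    * pose phi x := if c x is Some i then nat_of_ord i else l - 1.
      apply: (@Hst_nat _ 0 l' phi).
        by move=> x; rewrite /phi; case: (c x) => [i|]; [have := ltn_ord i|]; lia.
      move=> x y; rewrite ltn0 /phi => e nxy.
      case ex: (c x) => [i|]; case ey: (c y) => [j|]; rewrite ex ey in e.
      -- have ij : i = j by apply: val_inj.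
         by apply: (hcl i); rewrite ?inE ?ex ?ey ?ij.
      -- by have := ltn_ord i; lia.
      -- by have := ltn_ord j; lia.
      -- by apply: (complete_ind hC); rewrite ?inE ?ex ?ey.
    * pose phi x := if x == val v then l else if c x is Some i then nat_of_ord i else l - 1.
      apply: (@Hst_nat _ 0 l' phi).
        by move=> x; rewrite /phi; case: (x == val v); case: (c x) => [i|]; try have := ltn_ord i; lia.
      move=> x y; rewrite ltn0 /phi => e nxy.
      case: eqP e => xv; case: eqP => yv.
      -- by rewrite xv yv eqxx in nxy.
      -- by case: (c y) => [j|]; [have := ltn_ord j|]; lia.
      -- by case: (c x) => [i|]; [have := ltn_ord i|]; lia.
      case ex: (c x) => [i|]; case ey: (c y) => [j|] e.
      -- have ij : i = j by apply: val_inj.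
         by apply: (hcl i); rewrite ?inE ?ex ?ey ?ij.
      -- by have := ltn_ord i; lia.
      -- by have := ltn_ord j; lia.
      -- have hx : x \in [set x | c x == None] by rewrite inE ex.
         have hy : y \in [set x | c x == None] by rewrite inE ey.
         have := @complete_ind (induced [set x | c x == None]) [set~ v] (Sub x hx) (Sub y hy) hcomp.
         apply; rewrite ?inE.
         ++ by apply: contra_not_neq xv => <-.
         ++ by apply: contra_not_neq yv => <-.
         ++ by apply: contra nxy => /eqP /(congr1 val) /= ->.
  + have [sl|ls] := leqP s l.
    * have /Hst_natE [phi [hb hg]] := E1 s (ltac:(lia)).
      apply: (Hst_nat (phi := phi)) => // x; have := hb x; lia.
    * have /Hst_natE [phi [hb hg]] := E1 l (ltac:(lia)).
      apply: (Hst_nat (phi := phi)); first by move=> x; have := hb x; lia.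
      apply: goodnat_thr hg => x; have := hb x; rewrite subnn addn0 => hx.
      by rewrite hx (leq_trans hx) // ltnW.
Qed.

Lemma emb_comp (A B C : graph) :
  is_induced_sub A B -> is_induced_sub B C -> is_induced_sub A C.
Proof.
move=> [f [fi fa]] [g [gi ga]]; exists (fun x => g (f x)); split.
- by move=> x y /gi /fi.
- by move=> x y; rewrite ga fa.
Qed.

Lemma costar_lemma (Y : graph) m :
  is_induced_sub Y (compl (star m)) -> complete Y \/ costar Y.
Proof.
move=> [g [ginj gadj]].
case: (pickP (fun y => g y == ord0)) => [y0 hy0|hno]; last first.
  left => x y _ _ nxy; rewrite -gadj /= /compl_adj /star_adj (inj_eq ginj) nxy.
  have hx : (g x == ord0) = false := hno x.
  have hy : (g y == ord0) = false := hno y.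
  by rewrite /= /star_adj hx hy.
right.
have ck : #|vert Y| = (#|vert Y|.-1).+1.
  by rewrite prednK //; apply/card_gt0P; exists y0.
exists (#|vert Y|.-1).
pose r y := cast_ord ck (enum_rank y).
pose a := r y0.
pose sw (i : 'I_(#|vert Y|.-1).+1) := if i == a then ord0 else if i == ord0 then a else i.
have swK : cancel sw sw.
  move=> i; rewrite /sw.
  case: (eqVneq i a) => [->|ia]; rewrite ?eqxx.
    by case: (eqVneq (ord0 : 'I_(#|vert Y|.-1).+1) a).
  case: (eqVneq i ord0) => [->|i0]; first by rewrite !eqxx.
  by rewrite (negbTE ia) (negbTE i0).
have rinj : injective r by move=> x y /cast_ord_inj /enum_rank_inj.
have finj : injective (fun y => sw (r y)) by move=> x y /(can_inj swK) /rinj.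
have sw0 : forall i, (sw i == ord0) = (i == a).
  move=> i; rewrite /sw; case: (eqVneq i a) => [e|ia]; first by rewrite eqxx.
  case: (eqVneq i ord0) => [e|i0]; last by rewrite (negbTE i0).
  by rewrite -e eq_sym (negbTE ia).
have g0 : forall x, (g x == ord0) = (x == y0).
  by move=> x; rewrite -(eqP hy0) (inj_eq ginj).
exists (fun y => sw (r y)); split.
  by apply: inj_card_bij => //; rewrite card_ord ck.
move=> x y; rewrite -gadj /= /compl_adj /star_adj (inj_eq finj) (inj_eq ginj).
rewrite /star /= /star_adj !sw0 !g0 /a !(inj_eq rinj). by []. Qed.

Lemma chi_uniq (F : gfam) l1 l2 : chi_c_is F l1 -> chi_c_is F l2 -> l1 = l2.
Proof.
move=> [h1 m1] [h2 m2]; apply/eqP; rewrite eqn_leq; apply/andP; split.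
- exact: m2.
- exact: m1.
Qed.

Lemma eps2_Y (H K : graph) l (F : gfam) :
  (forall phi : vert H -> option nat, (forall x k, phi x = Some k -> k < 0 + (l - 1 - 0)) ->
    goodopt 0 phi -> ~ is_induced_sub (induced [set x | phi x == None]) K) ->
  EPS2_for l H F -> exists Y, F Y /\ #|vert Y| <= #|vert H| /\ ~ is_induced_sub Y K.
Proof.
move=> Hf [c [hcl hF]].
pose phi x := omap (fun i : 'I_(l - 1) => nat_of_ord i) (c x).
have hset : [set x | phi x == None] = [set x | c x == None].
  by apply/setP => x; rewrite !inE /phi; case: (c x).
exists (induced [set x | c x == None]); split => //; split.
  by rewrite card_vert_induced max_card.
rewrite -hset; apply: Hf.
- move=> x k; rewrite /phi; case: (c x) => // i [<-]; have := ltn_ord i; lia.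
- move=> x y k; rewrite /phi ltn0.
  case ex: (c x) => [i|] //; case ey: (c y) => [j|] // [ei] [ej] nxy.
  have ij : i = j by apply: val_inj => /=; rewrite ei ej.
  by apply: (hcl i); rewrite ?inE ?ex ?ey ?ij.
Qed.

Definition pick (K : graph) (a b : vert K) (i : 'I_2) := if nat_of_ord i == 0 then a else b.

Lemma I2E (i : 'I_2) : (nat_of_ord i == 0) = false -> nat_of_ord i = 1.
Proof. have := ltn_ord i; move=> hi /negbT; lia. Qed.

Lemma pick_inj (K : graph) (a b : vert K) : a != b -> injective (pick a b).
Proof.
move=> ab i j; rewrite /pick.
case: ifP => hi; case: ifP => hj e; apply: val_inj => /=.
- by rewrite (eqP hi) (eqP hj).
- by rewrite e eqxx in ab.
- by rewrite e eqxx in ab.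
- by rewrite (I2E hi) (I2E hj).
Qed.

Lemma pick_S2 (K : graph) (a b : vert K) : ~~ adj a b ->
  forall i j, adj (pick a b i) (pick a b j) = S2_adj i j.
Proof.
move=> ab i j; rewrite /pick /S2_adj.
case: ifP => _; case: ifP => _; rewrite ?adj_irrE //; first exact: negbTE.
by rewrite adj_sym; apply: negbTE.
Qed.

Lemma pick_K2 (K : graph) (a b : vert K) : adj a b ->
  forall i j, adj (pick a b i) (pick a b j) = K2_adj i j.
Proof.
move=> ab i j; rewrite /pick /K2_adj.
case: ifP => hi; case: ifP => hj.
- have -> : i = j by apply: val_inj; rewrite /= (eqP hi) (eqP hj).
  by rewrite eqxx adj_irrE.
- rewrite ab; symmetry; apply/negP => /eqP e; by rewrite e hj in hi.
- rewrite adj_sym ab; symmetry; apply/negP => /eqP e; by rewrite e hj in hi.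
- have -> : i = j by apply: val_inj; rewrite /= (I2E hi) (I2E hj).
  by rewrite eqxx adj_irrE.
Qed.

Lemma emb_restrict (H G : graph) (f : vert H -> vert G) (A : {set vert H}) (B : {set vert G}) :
  injective f -> (forall x y, adj (f x) (f y) = adj x y) ->
  (forall x, x \in A -> f x \in B) -> is_induced_sub (induced A) (induced B).
Proof.
move=> finj fadj hAB.
exists (fun x => (Sub (f (val x)) (hAB _ (valP x)) : vert (induced B))); split.
- by move=> x y /(congr1 val) /= /finj /val_inj.
- by move=> x y; exact: fadj.
Qed.

Unset Implicit Arguments.

Theorem lemma3p11 (H : graph) : EPS H -> critical 1 H /\ ~ critical 0 H.
Proof.
move=> [l hl]; have chi := chi_l hl.
have [l0 [E1 [E2a [E2b [E2c [E2d E3]]]]]] := hl.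
set n := #|vert H|.
split.
- exists (2 ^ (3 * n)) => K hK hsz.
  have [l1 [s [chi1 [sl1 Hf]]]] := red_forbid hK.
  have e : l1 = l := chi_uniq chi1 chi.
  subst l1.
  have : 0 < #|vert K| by rewrite (leq_trans _ hsz) // expn_gt0.
  case/card_gt0P => k0 _.
  have NS : forall Q : {set vert K}, stable Q -> #|Q| < n.
    move=> Q sQ; rewrite ltnNge; apply/negP => hQ.
    have /Hst_natE [phi0 [hb hg]] := E1 s.+1 ltac:(lia).
    have hb2 : forall x, phi0 x < (s + (l - 1 - s)).+1 by move=> x; have := hb x; lia.
    have := relab hg (or_intror erefl) hb2 (leq_addr _ _).
    move=> [hb' [hg' hset]].
    apply: (Hf _ hb' hg'); rewrite hset.
    apply: (emb_stable k0 _ sQ); last by rewrite card_vert_induced (leq_trans (max_card _) hQ).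
    move=> x y _ _.
    have hx := valP x; have hy := valP y; rewrite !inE in hx hy.
    have [->|nxy] := eqVneq x y; first by rewrite adj_irrE.
    have := hg (val x) (val y); rewrite (eqP hx) (eqP hy) ltnSn; apply => //.
  have hram : forall a b, a + b <= 3 * n -> exists Q : {set vert K},
      (clique Q /\ a <= #|Q|) \/ (stable Q /\ b <= #|Q|).
    move=> a b hab.
    have [Q [_ HQ]] := ramsey (k := a + b) (V := [set: vert K]) erefl
      ltac:(rewrite cardsT (leq_trans _ hsz) // leq_pexp2l //).
    by exists Q.
  have [s0|spos] := posnP s; last first.
    have NCl : forall Q : {set vert K}, clique Q -> #|Q| < n.
      move=> Q sQ; rewrite ltnNge; apply/negP => hQ.
      have /Hst_natE [phi0 [hb hg]] := E1 s ltac:(lia).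
      have hb2 : forall x, phi0 x < (s + (l - 1 - s)).+1 by move=> x; have := hb x; lia.
      have := relab hg (or_introl erefl) hb2 (leq_addr _ _).
      move=> [hb' [hg' hset]].
      apply: (Hf _ hb' hg'); rewrite hset.
      apply: (emb_clique k0 _ sQ); last by rewrite card_vert_induced (leq_trans (max_card _) hQ).
      move=> x y _ _ nxy.
      have hx := valP x; have hy := valP y; rewrite !inE in hx hy.
      have := hg (val x) (val y); rewrite (eqP hx) (eqP hy) ltnn; apply => //.
    have [Q [[cQ hQ]|[sQ hQ]]] := hram n n ltac:(lia).
    + by have := NCl Q cQ; lia.
    + by have := NS Q sQ; lia.
  subst s.
  have [Ya [[A [hA [cA cross]]] [ha na]]] := eps2_Y Hf E2a.
  have [Yb [[B [hB [cB crossB]]] [hbb nb]]] := eps2_Y Hf E2b.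
  have [Yc [[C [hC [cC crossC]]] [hc nc]]] := eps2_Y Hf E2c.
  have [Yd [hD [hd nd]]] := eps2_Y Hf E2d.
  have [Q [[cQ hQ]|[sQ hQ]]] := hram (2 * n) n ltac:(lia); last by have := NS Q sQ; lia.
  apply: (struct1 (n := n) _ _ _ _ cQ hQ).
  + move=> a b Q' ab nab cQ' aQ bQ ha' hb'; rewrite ltnNge; apply/negP => hQ'.
    apply: na; apply: (@emb_dj Ya K S2 A false (pick a b) Q' k0 hA cA).
    * by move=> x y hx hy; apply/negbTE; exact: cross.
    * exact: pick_inj.
    * exact: pick_S2.
    * exact: cQ'.
    * by move=> i; rewrite /pick; case: ifP.
    * by move=> i q hq; rewrite /pick; case: ifP => _; apply/negbTE; [exact: ha'|exact: hb'].
    * exact: leq_trans hQ'.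
  + move=> a b Q' ab nab cQ' aQ bQ ha' hb'; rewrite ltnNge; apply/negP => hQ'.
    apply: nb; apply: (@emb_dj Yb K K2 B false (pick a b) Q' k0 hB cB).
    * by move=> x y hx hy; apply/negbTE; exact: crossB.
    * exact: pick_inj.
    * exact: pick_K2.
    * exact: cQ'.
    * by move=> i; rewrite /pick; case: ifP.
    * by move=> i q hq; rewrite /pick; case: ifP => _; apply/negbTE; [exact: ha'|exact: hb'].
    * exact: leq_trans hQ'.
  + move=> a b Q' ab nab cQ' aQ bQ ha' hb'; rewrite ltnNge; apply/negP => hQ'.
    apply: nc; apply: (@emb_dj Yc K S2 C true (pick a b) Q' k0 hC cC).
    * by move=> x y hx hy; exact: crossC.
    * exact: pick_inj.
    * exact: pick_S2.
    * exact: cQ'.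
    * by move=> i; rewrite /pick; case: ifP.
    * by move=> i q hq; rewrite /pick; case: ifP => _; [exact: ha'|exact: hb'].
    * exact: leq_trans hQ'.
  + move=> Q' u z cQ' uQ zQ zu hz; rewrite leqNgt; apply/negP => hQ'.
    apply: nd; apply: (emb_cplus hD cQ' uQ zQ zu hz).
    exact: leq_ltn_trans hQ'.
- move=> [n0 hn0].
  have e1 : 0 + (l - 1 - 0) = l - 1 by rewrite subn0.
  have hred : reduced (Forb H) (compl (star n0.+2)).
    exists l; split => //; exists 0; split => //.
    move=> G [c [hK hcl]] [f [finj fadj]].
    pose c'' x : option 'I_(l - 1) :=
      if c (f x) is Some i then insub (nat_of_ord i) else None.
    have cS : forall x i, c'' x = Some i -> exists j, c (f x) = Some j /\ nat_of_ord j = i.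
      move=> x i; rewrite /c''; case: (c (f x)) => // j /insub_someE e.
      by exists j.
    have hset : [set x | c'' x == None] = [set x | c (f x) == None].
      apply/setP => x; rewrite !inE /c''; case: (c (f x)) => // j.
      by rewrite insubT //; have := ltn_ord j; lia.
    apply: E3; exists c''; split.
    + rewrite hset; apply: (@costar_lemma _ n0.+2).
      apply: emb_comp hK.
      apply: (emb_restrict finj fadj) => x; by rewrite !inE.
    + move=> i x y; rewrite !inE => /eqP /cS [jx [hx ex]] /eqP /cS [jy [hy ey]] nxy.
      have ej : jx = jy by apply: val_inj; rewrite /= ex ey.
      have cl : clique [set x | c x == Some jx] := hcl jx.
      rewrite -fadj; apply: cl; rewrite ?inE ?hx ?hy ?ej //.
      by rewrite (inj_eq finj).
  have := hn0 _ hred; rewrite card_ord => /(_ ltac:(lia)) [S [hS [[cl|st] _]]].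
  + have S0 : S = set0 by apply/eqP; rewrite -cards_eq0; lia.
    subst S.
    have := cl (ord0 : 'I_n0.+3) (Ordinal (isT : 1 < n0.+3)).
    by rewrite !inE /= => /(_ isT isT isT).
  + have S0 : S = set0 by apply/eqP; rewrite -cards_eq0; lia.
    subst S.
    have := st (Ordinal (isT : 1 < n0.+3)) (Ordinal (isT : 2 < n0.+3)).
    by rewrite !inE /= => /(_ isT isT).
Qed.
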